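(* Let $q\in(0,1)$ and let $\alpha,\beta,z\in\mathbb{C}$ with $|\alpha|<1$ and $z\neq0$. Then the sequences $(\psi_n^{+}(z))_{n\ge-1}$ and $(\psi_n^{-}(z))_{n\ge-1}$ are both solutions of the difference equation \[ \psi_{n-1}-(z+z^{-1})\frac{1-\beta q^n}{1-\alpha q^n}\psi_n+\psi_{n+1}=0,\qquad n\in\mathbb{N}_0. \] Moreover, their Wronskian $W(\psi^+,\psi^-):=\psi_n^+(z)\psi_{n+1}^-(z)-\psi_{n+1}^+(z)\psi_n^-(z)$ (which is independent of $n$) equals \[ W(\psi^+,\psi^-)=z^{-1}\left(z^2,qz^{-2};q\right)_\infty. \] Consequently, $\psi^{+}(z)$ and $\psi^-(z)$ are linearly independent if and only if $z\notin\pm q^{\mathbb{Z}/2}$.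
   Context: For $a\in\mathbb{C}$ and $n\in\mathbb{N}_0\cup\{\infty\}$, $(a;q)_n:=\prod_{j=0}^{n-1}(1-aq^j)$ and $(a_1,\dots,a_r;q)_n:=\prod_i(a_i;q)_n$. For $z\neq0$ define $c_k(z):=\prod_{j=0}^{k-1}\bigl(\alpha(1+z^2q^{2j})-\beta q^j(1+z^2)\bigr)$ (this equals $\alpha^k(z\tau,z\tau^{-1};q)_k$ for any $\tau\ne0$ with $\alpha(\tau+\tau^{-1})=\beta(z+z^{-1})$), and for integers $n\ge-1$, \[ \psi_n^{+}(z):=z^{n}\sum_{k=0}^{\infty}\frac{(q^{k+1}z^{2};q)_\infty}{(q;q)_k}\,c_k(z)\,q^{(n+1)k},\qquad \psi_n^-(z):=\psi_n^+(z^{-1}). \] When $z^2\notin q^{-\mathbb{N}}$ this is $\psi_n^+(z)=z^n(qz^2;q)_\infty\,{}_2\phi_1(z\tau,z\tau^{-1};qz^2;q,\alpha q^{n+1})$, where ${}_2\phi_1(a,b;c;q,w)=\sum_{k\ge0}\frac{(a,b;q)_k}{(c,q;q)_k}w^k$. $q^{\mathbb{Z}/2}$ denotes $\{q^{j/2}:j\in\mathbb{Z}\}$. *)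

(* Defs.v *)
From Stdlib Require Import Reals ZArith.
From Coquelicot Require Import Coquelicot.

Open Scope C_scope.

Fixpoint qpoch (a : C) (q : R) (n : nat) : C :=
  match n with
  | O => RtoC 1
  | S m => qpoch a q m * (RtoC 1 - a * RtoC (q ^ m))
  end.

Definition qpoch_inf (a : C) (q : R) : C :=
  @lim (CompleteNormedModule.CompleteSpace _ C_CompleteNormedModule) (filtermap (fun n => qpoch a q n) eventually).

Definition csum (f : nat -> C) : C :=
  @lim (CompleteNormedModule.CompleteSpace _ C_CompleteNormedModule) (filtermap (fun N => sum_n f N) eventually).

Definition zpowC (z : C) (n : Z) : C :=
  match n with
  | Z0 => RtoC 1
  | Zpos p => Cpow z (Pos.to_nat p)
  | Zneg p => / Cpow z (Pos.to_nat p)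
  end.

Fixpoint ck (alpha beta : C) (q : R) (z : C) (k : nat) : C :=
  match k with
  | O => RtoC 1
  | S j => ck alpha beta q z j *
           (alpha * (RtoC 1 + z * z * RtoC (q ^ (2 * j)))
            - beta * RtoC (q ^ j) * (RtoC 1 + z * z))
  end.

(* psi_n^+(z) = z^n sum_k (q^{k+1} z^2;q)_oo / (q;q)_k c_k(z) q^{(n+1)k},
   meaningful for integers n >= -1 *)
Definition psi_plus (alpha beta : C) (q : R) (z : C) (n : Z) : C :=
  zpowC z n *
  csum (fun k => qpoch_inf (RtoC (q ^ (S k)) * (z * z)) q / qpoch (RtoC q) q k
                 * ck alpha beta q z k * RtoC (q ^ (Z.to_nat (n + 1) * k))).

Definition psi_minus (alpha beta : C) (q : R) (z : C) (n : Z) : C :=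
  psi_plus alpha beta q (/ z) n.

Definition solves_rec (alpha beta : C) (q : R) (z : C) (psi : Z -> C) : Prop :=
  forall n : nat,
    psi (Z.of_nat n - 1)%Z
    - (z + / z) * ((RtoC 1 - beta * RtoC (q ^ n)) / (RtoC 1 - alpha * RtoC (q ^ n)))
      * psi (Z.of_nat n)
    + psi (Z.of_nat n + 1)%Z = RtoC 0.

Definition lin_indep (f g : Z -> C) : Prop :=
  forall a b : C, (forall n : Z, (-1 <= n)%Z -> a * f n + b * g n = RtoC 0) ->
    a = RtoC 0 /\ b = RtoC 0.

(* Main.v *)
Require Import Defs.
From Stdlib Require Import Reals ZArith Lra Lia Psatz Classical FunctionalExtensionality.
From Coquelicot Require Import Coquelicot.
Open Scope C_scope.

Definition Flim (u : nat -> C) : C :=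
  @lim (CompleteNormedModule.CompleteSpace _ C_CompleteNormedModule) (filtermap u eventually).

Definition conv (u : nat -> C) (l : C) : Prop :=
  forall eps : R, (0 < eps)%R -> exists N, forall n, (N <= n)%nat -> (Cmod (u n - l) < eps)%R.

Lemma Cmod_small_0 (d : C) : (forall eps, (0 < eps)%R -> (Cmod d < eps)%R) -> d = 0.
Proof.
  intros H. apply Cmod_eq_0. destruct (Cmod_ge_0 d) as [Hd|Hd]; [|auto].
  specialize (H _ Hd). lra.
Qed.

Lemma Cmod_minus_sym (a b : C) : Cmod (a - b) = Cmod (b - a).
Proof. replace (a - b) with (- (b - a)) by ring. apply Cmod_opp. Qed.

Lemma cauchy_conv (u : nat -> C) :
  (forall eps, (0 < eps)%R -> exists N, forall n m, (N <= n)%nat -> (N <= m)%nat ->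
     (Cmod (u n - u m) < eps)%R) -> conv u (Flim u).
Proof.
  intros Hc.
  assert (HC : cauchy (filtermap u eventually)).
  { intros eps. destruct (Hc eps (cond_pos eps)) as [N HN].
    exists (u N). exists N. intros n Hn. apply (@norm_compat1 C_AbsRing C_NormedModule).
    change (Cmod (u n - u N) < eps)%R. apply HN; lia. }
  intros eps Heps.
  pose proof (@norm_factor_gt_0 C_AbsRing C_NormedModule) as Hnf.
  assert (He : (0 < eps / norm_factor (V:=C_NormedModule))%R).
  { apply Rdiv_lt_0_compat; lra. }
  pose proof (@complete_cauchy (CompleteNormedModule.CompleteSpace _ C_CompleteNormedModule)
               (filtermap u eventually) _ HC (mkposreal _ He)) as H.
  destruct H as [N HN]. exists N. intros n Hn.
  specialize (HN n Hn).
  pose proof (@norm_compat2 C_AbsRing C_NormedModule _ _ _ HN) as H2.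
  change (Cmod (u n - Flim u) < norm_factor (V:=C_NormedModule) * (eps / norm_factor (V:=C_NormedModule)))%R in H2.
  replace (norm_factor * (eps / norm_factor))%R with eps in H2 by (field; lra).
  exact H2.
Qed.

Lemma conv_cauchy (u : nat -> C) (l : C) : conv u l ->
  (forall eps, (0 < eps)%R -> exists N, forall n m, (N <= n)%nat -> (N <= m)%nat ->
     (Cmod (u n - u m) < eps)%R).
Proof.
  intros H eps Heps. destruct (H (eps/2)%R ltac:(lra)) as [N HN]. exists N.
  intros n m Hn Hm. replace (u n - u m) with ((u n - l) + - (u m - l)) by ring.
  eapply Rle_lt_trans. apply Cmod_triangle. rewrite Cmod_opp.
  pose proof (HN n Hn). pose proof (HN m Hm). lra.
Qed.

Lemma conv_unique (u : nat -> C) (l l' : C) : conv u l -> conv u l' -> l = l'.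
Proof.
  intros H1 H2. assert (l - l' = 0).
  { apply Cmod_small_0. intros eps Heps.
    destruct (H1 (eps/2)%R ltac:(lra)) as [N1 HN1].
    destruct (H2 (eps/2)%R ltac:(lra)) as [N2 HN2].
    specialize (HN1 (N1+N2)%nat ltac:(lia)). specialize (HN2 (N1+N2)%nat ltac:(lia)).
    replace (l - l') with (- (u (N1+N2)%nat - l) + (u (N1+N2)%nat - l')) by ring.
    eapply Rle_lt_trans. apply Cmod_triangle. rewrite Cmod_opp. lra. }
  replace l with ((l - l') + l') by ring. rewrite H. ring.
Qed.

Lemma Flim_eq (u : nat -> C) (l : C) : conv u l -> Flim u = l.
Proof.
  intros H. apply (conv_unique u). apply cauchy_conv. apply (conv_cauchy u l H). exact H.
Qed.

Lemma le_of_lt_eps (a b : R) : (forall eps, (0 < eps)%R -> (a < b + eps)%R) -> (a <= b)%R.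
Proof.
  intros H. destruct (Rle_or_lt a b) as [h|h]; auto.
  specialize (H ((a - b)/2)%R ltac:(lra)). lra.
Qed.

Lemma conv_plus u v a b : conv u a -> conv v b -> conv (fun n => u n + v n) (a + b).
Proof.
  intros H1 H2 eps He. destruct (H1 (eps/2)%R ltac:(lra)) as [N1 HN1].
  destruct (H2 (eps/2)%R ltac:(lra)) as [N2 HN2]. exists (N1+N2)%nat. intros n Hn.
  replace (u n + v n - (a + b)) with ((u n - a) + (v n - b)) by ring.
  eapply Rle_lt_trans. apply Cmod_triangle.
  pose proof (HN1 n ltac:(lia)). pose proof (HN2 n ltac:(lia)). lra.
Qed.

Lemma conv_scal u a c : conv u a -> conv (fun n => c * u n) (c * a).
Proof.
  intros H eps He.
  destruct (H (eps / (Cmod c + 1))%R) as [N HN].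
  { apply Rdiv_lt_0_compat; auto. pose proof (Cmod_ge_0 c). lra. }
  exists N. intros n Hn. replace (c * u n - c * a) with (c * (u n - a)) by ring.
  rewrite Cmod_mult. specialize (HN n Hn). pose proof (Cmod_ge_0 c).
  pose proof (Cmod_ge_0 (u n - a)).
  apply Rle_lt_trans with ((Cmod c + 1) * Cmod (u n - a))%R. nra.
  replace eps with ((Cmod c + 1) * (eps / (Cmod c + 1)))%R by (field; lra).
  apply Rmult_lt_compat_l; lra.
Qed.

Lemma conv_S u l : conv (fun n => u (S n)) l -> conv u l.
Proof.
  intros H eps He. destruct (H eps He) as [N HN]. exists (S N). intros n Hn.
  destruct n. lia. apply HN. lia.
Qed.

Lemma conv_const c : conv (fun _ => c) c.
Proof. intros eps He. exists O. intros. replace (c - c) with (RtoC 0) by ring. rewrite Cmod_0. auto. Qed.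

Lemma conv_ext u v l : (forall n, u n = v n) -> conv u l -> conv v l.
Proof. intros E H eps He. destruct (H eps He) as [N HN]. exists N. intros n Hn. rewrite <- E. auto. Qed.

Lemma sum_n_S (f : nat -> C) n : sum_n f (S n) = sum_n f n + f (S n).
Proof. exact (@sum_Sn C_AbelianMonoid f n). Qed.

Lemma sum_n_0 (f : nat -> C) : sum_n f O = f O.
Proof. exact (@sum_O C_AbelianMonoid f). Qed.

Lemma sum_n_shift (f : nat -> C) n : sum_n f (S n) = f O + sum_n (fun k => f (S k)) n.
Proof.
  induction n. rewrite sum_n_S, !sum_n_0. auto.
  rewrite sum_n_S, IHn, sum_n_S. rewrite <- Cplus_assoc. reflexivity.
Qed.

Definition geo (f : nat -> C) (K r : R) : Prop :=
  (0 <= r < 1)%R /\ forall k, (Cmod (f k) <= K * r ^ k)%R.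

Lemma geo_K_nonneg f K r : geo f K r -> (0 <= K)%R.
Proof. intros [_ H]. specialize (H O). simpl in H. pose proof (Cmod_ge_0 (f O)). lra. Qed.

Lemma geo_tail f K r : geo f K r -> forall n m,
  (Cmod (sum_n f (n + m) - sum_n f n) <= K * (r ^ (S n) - r ^ (S (n + m))) / (1 - r))%R.
Proof.
  intros Hg n m. destruct Hg as [[Hr0 Hr1] Hb]. induction m.
  - rewrite Nat.add_0_r. replace (sum_n f n - sum_n f n) with (RtoC 0) by ring.
    rewrite Cmod_0. right. field. lra.
  - rewrite Nat.add_succ_r, sum_n_S.
    replace (sum_n f (n + m) + f (S (n + m)) - sum_n f n) with
      ((sum_n f (n + m) - sum_n f n) + f (S (n+m))) by ring.
    eapply Rle_trans. apply Cmod_triangle.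
    eapply Rle_trans. apply Rplus_le_compat. apply IHm. apply Hb.
    right. simpl. field. lra.
Qed.

Lemma geo_tail' f K r : geo f K r -> forall n m,
  (Cmod (sum_n f (n + m) - sum_n f n) <= K * r ^ n / (1 - r))%R.
Proof.
  intros Hg n m. pose proof (geo_K_nonneg _ _ _ Hg). destruct Hg as [[Hr0 Hr1] Hb] eqn:E.
  eapply Rle_trans. apply (geo_tail f K r Hg).
  unfold Rdiv. apply Rmult_le_compat_r. apply Rlt_le, Rinv_0_lt_compat. lra.
  apply Rmult_le_compat_l. auto. simpl.
  pose proof (pow_le r n Hr0). pose proof (pow_le r (S (n+m)) Hr0). simpl in H1. nra.
Qed.

Lemma pow_small (r : R) (eps : R) : (0 <= r < 1)%R -> (0 < eps)%R -> exists N, (r ^ N < eps)%R.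
Proof.
  intros Hr He. destruct (pow_lt_1_zero r ltac:(rewrite Rabs_pos_eq; lra) eps He) as [N HN].
  exists N. specialize (HN N ltac:(lia)). rewrite Rabs_pos_eq in HN; auto. apply pow_le; lra.
Qed.

Lemma geo_conv f K r : geo f K r -> conv (sum_n f) (csum f).
Proof.
  intros Hg. apply cauchy_conv. intros eps He.
  pose proof (geo_K_nonneg _ _ _ Hg). destruct Hg as [[Hr0 Hr1] Hb] eqn:E.
  destruct (pow_small r (eps / 2 * (1 - r) / (K + 1))%R) as [N HN]; auto.
  { apply Rdiv_lt_0_compat; nra. }
  assert (Hk : forall n, (N <= n)%nat -> (Cmod (sum_n f n - sum_n f N) < eps / 2)%R).
  { intros n Hn. replace n with (N + (n - N))%nat by lia.
    eapply Rle_lt_trans. apply (geo_tail' _ _ _ Hg).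
    apply Rle_lt_trans with ((K + 1) * r ^ N / (1 - r))%R.
    unfold Rdiv. apply Rmult_le_compat_r. apply Rlt_le, Rinv_0_lt_compat. lra.
    pose proof (pow_le r N Hr0). nra.
    apply Rmult_lt_reg_r with (1 - r)%R. lra.
    replace ((K + 1) * r ^ N / (1 - r) * (1 - r))%R with ((K+1) * r ^ N)%R by (field; lra).
    apply Rmult_lt_reg_r with (/ (K+1))%R. apply Rinv_0_lt_compat; lra.
    replace ((K + 1) * r ^ N * / (K + 1))%R with (r ^ N)%R by (field; lra).
    eapply Rlt_le_trans. apply HN. right. field. lra. }
  exists N. intros n m Hn Hm.
  replace (sum_n f n - sum_n f m) with ((sum_n f n - sum_n f N) + - (sum_n f m - sum_n f N)) by ring.
  eapply Rle_lt_trans. apply Cmod_triangle. rewrite Cmod_opp.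
  pose proof (Hk n Hn). pose proof (Hk m Hm).
  lra.
Qed.

Lemma geo_plus f g K K' r : geo f K r -> geo g K' r -> geo (fun k => f k + g k) (K + K') r.
Proof.
  intros [Hr H1] [_ H2]. split; auto. intros k. eapply Rle_trans. apply Cmod_triangle.
  specialize (H1 k). specialize (H2 k). lra.
Qed.

Lemma geo_scal f c K r : geo f K r -> geo (fun k => c * f k) (Cmod c * K) r.
Proof.
  intros [Hr H1]. split; auto. intros k. rewrite Cmod_mult. rewrite Rmult_assoc.
  apply Rmult_le_compat_l. apply Cmod_ge_0. auto.
Qed.

Lemma geo_shift f K r : geo f K r -> geo (fun k => f (S k)) K r.
Proof.
  intros Hg. pose proof (geo_K_nonneg _ _ _ Hg). destruct Hg as [Hr H1]. split; auto.
  intros k. eapply Rle_trans. apply H1. simpl. pose proof (pow_le r k ltac:(lra)).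
  apply Rmult_le_compat_l; auto. nra.
Qed.

Lemma geo_ext f g K r : (forall k, f k = g k) -> geo f K r -> geo g K r.
Proof. intros E [Hr H]. split; auto. intros k. rewrite <- E. auto. Qed.

Lemma geo_le f g K r : (forall k, (Cmod (g k) <= Cmod (f k))%R) -> geo f K r -> geo g K r.
Proof. intros E [Hr H]. split; auto. intros k. eapply Rle_trans. apply E. auto. Qed.

Lemma csum_eq f K r l : geo f K r -> conv (sum_n f) l -> csum f = l.
Proof. intros _ H. apply Flim_eq. exact H. Qed.

Lemma csum_ext f g : (forall k, f k = g k) -> csum f = csum g.
Proof. intros E. f_equal. apply functional_extensionality. auto. Qed.

Lemma csum_plus f g K K' r : geo f K r -> geo g K' r ->
  csum (fun k => f k + g k) = csum f + csum g.
Proof.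
  intros H1 H2. apply Flim_eq.
  apply conv_ext with (fun n => sum_n f n + sum_n g n).
  { intros n. symmetry. exact (@sum_n_plus C_AbelianMonoid f g n). }
  apply conv_plus; eapply geo_conv; eauto.
Qed.

Lemma csum_scal f c K r : geo f K r -> csum (fun k => c * f k) = c * csum f.
Proof.
  intros H1. apply Flim_eq.
  apply conv_ext with (fun n => c * sum_n f n).
  { intros n. symmetry. exact (@sum_n_mult_l C_Ring c f n). }
  apply conv_scal; eapply geo_conv; eauto.
Qed.

Lemma csum_shift f K r : geo f K r -> csum f = f O + csum (fun k => f (S k)).
Proof.
  intros H1. apply Flim_eq. apply conv_S.
  apply conv_ext with (fun n => f O + sum_n (fun k => f (S k)) n).
  { intros n. symmetry. apply sum_n_shift. }
  apply conv_plus. apply conv_const. eapply geo_conv. apply geo_shift; eauto.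
Qed.

Lemma geo_partial f K r : geo f K r -> forall n, (Cmod (sum_n f n) <= K * (1 - r ^ (S n)) / (1 - r))%R.
Proof.
  intros [[Hr0 Hr1] H] n. induction n.
  - rewrite sum_n_0. eapply Rle_trans. apply H. right. simpl. field. lra.
  - rewrite sum_n_S. eapply Rle_trans. apply Cmod_triangle.
    eapply Rle_trans. apply Rplus_le_compat. apply IHn. apply H.
    right. simpl. field. lra.
Qed.

Lemma csum_bound f K r : geo f K r -> (Cmod (csum f) <= K / (1 - r))%R.
Proof.
  intros Hg. pose proof (geo_K_nonneg _ _ _ Hg) as HK0. pose proof (geo_conv _ _ _ Hg) as Hc.
  destruct Hg as [[Hr0 Hr1] Hb] eqn:E.
  apply le_of_lt_eps. intros eps He. destruct (Hc eps He) as [N HN].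
  specialize (HN N (le_n _)).
  pose proof (geo_partial _ _ _ Hg N).
  replace (csum f) with (sum_n f N - (sum_n f N - csum f)) by ring.
  eapply Rle_lt_trans. apply Cmod_triangle. rewrite Cmod_opp.
  assert (K * (1 - r ^ S N) / (1 - r) <= K / (1 - r))%R.
  { unfold Rdiv. apply Rmult_le_compat_r. apply Rlt_le, Rinv_0_lt_compat. lra.
    pose proof (pow_le r (S N) Hr0). nra. }
  lra.
Qed.

Lemma pow_le1 (q : R) n : (0 <= q <= 1)%R -> (q ^ n <= 1)%R.
Proof. intros Hq. induction n; simpl. lra. pose proof (pow_le q n ltac:(lra)). nra. Qed.

Lemma pow_anti (q : R) m n : (0 <= q <= 1)%R -> (m <= n)%nat -> (q ^ n <= q ^ m)%R.
Proof.
  intros Hq Hmn. replace n with (m + (n - m))%nat by lia. rewrite pow_add.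
  pose proof (pow_le q m ltac:(lra)). pose proof (pow_le1 q (n - m) Hq). nra.
Qed.

Lemma Cmult_integral (x y : C) : x * y = 0 -> x = 0 \/ y = 0.
Proof.
  intros H. assert (Cmod x * Cmod y = 0)%R by (rewrite <- Cmod_mult, H; apply Cmod_0).
  apply Rmult_integral in H0. destruct H0; [left|right]; apply Cmod_eq_0; auto.
Qed.

Lemma geo_cauchy_conv (u : nat -> C) K r : (0 <= r < 1)%R ->
  (forall N m, (Cmod (u (N + m)%nat - u N) <= K * r ^ N)%R) -> conv u (Flim u).
Proof.
  intros [Hr0 Hr1] Hb. apply cauchy_conv. intros eps He.
  assert (HK : (0 <= K)%R). { specialize (Hb O O). simpl in Hb.
    replace (u 0%nat - u 0%nat) with (RtoC 0) in Hb by ring. rewrite Cmod_0 in Hb. lra. }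
  destruct (pow_small r (eps / 2 / (K + 1))%R) as [N HN]; auto.
  { apply Rdiv_lt_0_compat; lra. }
  assert (Hk : forall n, (N <= n)%nat -> (Cmod (u n - u N) < eps / 2)%R).
  { intros n Hn. replace n with (N + (n - N))%nat by lia.
    eapply Rle_lt_trans. apply Hb.
    apply Rle_lt_trans with ((K + 1) * r ^ N)%R. pose proof (pow_le r N Hr0). nra.
    apply Rmult_lt_reg_r with (/ (K+1))%R. apply Rinv_0_lt_compat; lra.
    replace ((K + 1) * r ^ N * / (K + 1))%R with (r ^ N)%R by (field; lra).
    eapply Rlt_le_trans. apply HN. right. field. lra. }
  exists N. intros n m Hn Hm.
  replace (u n - u m) with ((u n - u N) + - (u m - u N)) by ring.
  eapply Rle_lt_trans. apply Cmod_triangle. rewrite Cmod_opp.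
  pose proof (Hk n Hn). pose proof (Hk m Hm). lra.
Qed.

Lemma conv_bound u l B : conv u l -> (forall n, (Cmod (u n) <= B)%R) -> (Cmod l <= B)%R.
Proof.
  intros Hc Hb. apply le_of_lt_eps. intros eps He. destruct (Hc eps He) as [N HN].
  specialize (HN N (le_n _)). specialize (Hb N).
  replace l with (u N - (u N - l)) by ring.
  eapply Rle_lt_trans. apply Cmod_triangle. rewrite Cmod_opp. lra.
Qed.

Lemma RtoC_pow_add (q : R) m n : RtoC (q ^ (m + n)) = RtoC (q ^ m) * RtoC (q ^ n).
Proof. rewrite pow_add. apply RtoC_mult. Qed.

Lemma qpoch_add a q m n : qpoch a q (m + n) = qpoch a q m * qpoch (a * RtoC (q ^ m)) q n.
Proof.
  induction n.
  - rewrite Nat.add_0_r. simpl. ring.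
  - rewrite Nat.add_succ_r. simpl. rewrite IHn. rewrite RtoC_pow_add. ring.
Qed.

Lemma Cmod_RtoC_pos (x : R) : (0 <= x)%R -> Cmod (RtoC x) = x.
Proof. intros. rewrite Cmod_R. apply Rabs_pos_eq. auto. Qed.

Lemma exp_mono x y : (x <= y)%R -> (exp x <= exp y)%R.
Proof. intros [H|H]. left; apply exp_increasing; auto. rewrite H; lra. Qed.

Lemma qpoch_tail b q n : (0 <= q < 1)%R ->
  (Cmod (qpoch b q n - 1) <= exp (Cmod b * ((1 - q ^ n) / (1 - q))) - 1)%R.
Proof.
  intros [Hq0 Hq1]. induction n.
  - simpl. replace (RtoC 1 - 1) with (RtoC 0) by ring. rewrite Cmod_0.
    replace (Cmod b * ((1 - 1) / (1 - q)))%R with 0%R by (field; lra). rewrite exp_0. lra.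
  - simpl qpoch.
    set (P := qpoch b q n) in *.
    replace (P * (RtoC 1 - b * RtoC (q ^ n)) - 1) with ((P - 1) - b * RtoC (q ^ n) * P) by ring.
    set (E := exp (Cmod b * ((1 - q ^ n) / (1 - q)))) in *.
    assert (HP : (Cmod P <= E)%R).
    { replace P with ((P - 1) + 1) by ring. eapply Rle_trans. apply Cmod_triangle.
      rewrite Cmod_1. lra. }
    pose proof (pow_le q n Hq0) as Hqn.
    assert (H1 : (Cmod (b * RtoC (q ^ n) * P) <= Cmod b * q ^ n * E)%R).
    { rewrite !Cmod_mult, Cmod_RtoC_pos; auto. apply Rmult_le_compat_l; auto.
      apply Rmult_le_pos; auto. apply Cmod_ge_0. }
    replace (exp (Cmod b * ((1 - q ^ S n) / (1 - q))))%R with (E * exp (Cmod b * q ^ n))%R.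
    2:{ unfold E. rewrite <- exp_plus. f_equal. simpl. field. lra. }
    pose proof (exp_ineq1_le (Cmod b * q ^ n)).
    assert (0 <= E)%R by (unfold E; apply Rlt_le, exp_pos).
    eapply Rle_trans. unfold Cminus at 1. apply Cmod_triangle. rewrite Cmod_opp.
    assert (E * (1 + Cmod b * q ^ n) <= E * exp (Cmod b * q ^ n))%R by (apply Rmult_le_compat_l; lra).
    nra.
Qed.

Lemma exp_sub1_le x : (0 <= x)%R -> (exp x - 1 <= x * exp x)%R.
Proof.
  intros Hx. pose proof (exp_ineq1_le (- x)). pose proof (exp_pos x).
  assert (exp x * exp (- x) = 1)%R by (rewrite <- exp_plus; replace (x + - x)%R with 0%R by ring; apply exp_0).
  nra.
Qed.

Lemma S_le (q : R) n : (0 <= q < 1)%R -> (0 <= (1 - q ^ n) / (1 - q) <= / (1 - q))%R.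
Proof.
  intros Hq. pose proof (pow_le q n ltac:(lra)). assert (q ^ n <= 1)%R by (apply pow_le1; lra).
  split. apply Rdiv_le_0_compat; lra.
  unfold Rdiv. rewrite <- (Rmult_1_l (/ (1 - q))) at 2. apply Rmult_le_compat_r.
  apply Rlt_le, Rinv_0_lt_compat; lra. lra.
Qed.

Lemma qpoch_tail' b q n : (0 <= q < 1)%R ->
  (Cmod (qpoch b q n - 1) <= Cmod b / (1 - q) * exp (Cmod b / (1 - q)))%R.
Proof.
  intros Hq. eapply Rle_trans. apply qpoch_tail; auto.
  pose proof (S_le q n Hq). pose proof (Cmod_ge_0 b).
  set (x := (Cmod b * ((1 - q ^ n) / (1 - q)))%R).
  assert (0 <= x <= Cmod b / (1 - q))%R. { unfold x, Rdiv. split. nra. apply Rmult_le_compat_l; lra. }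
  eapply Rle_trans. apply exp_sub1_le. lra.
  apply Rmult_le_compat; try lra. apply Rlt_le, exp_pos. apply exp_mono. lra.
Qed.

Lemma qpoch_bound b q n : (0 <= q < 1)%R -> (Cmod (qpoch b q n) <= exp (Cmod b / (1 - q)))%R.
Proof.
  intros Hq. replace (qpoch b q n) with ((qpoch b q n - 1) + 1) by ring.
  eapply Rle_trans. apply Cmod_triangle. rewrite Cmod_1.
  eapply Rle_trans. apply Rplus_le_compat_r. apply qpoch_tail; auto.
  pose proof (S_le q n Hq). pose proof (Cmod_ge_0 b).
  assert (Cmod b * ((1 - q ^ n) / (1 - q)) <= Cmod b / (1 - q))%R.
  { unfold Rdiv. apply Rmult_le_compat_l; lra. }
  apply exp_mono in H1. lra.
Qed.

Lemma qpoch_conv a q : (0 <= q < 1)%R -> conv (fun n => qpoch a q n) (qpoch_inf a q).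
Proof.
  intros Hq. change (conv (fun n => qpoch a q n) (Flim (fun n => qpoch a q n))).
  set (E := exp (Cmod a / (1 - q))).
  apply geo_cauchy_conv with (K := (E * (Cmod a / (1 - q)) * E)%R) (r := q); auto.
  intros N m. rewrite qpoch_add.
  replace (qpoch a q N * qpoch (a * RtoC (q ^ N)) q m - qpoch a q N)
    with (qpoch a q N * (qpoch (a * RtoC (q ^ N)) q m - 1)) by ring.
  rewrite Cmod_mult.
  pose proof (pow_le q N ltac:(lra)). pose proof (pow_le1 q N ltac:(lra)).
  assert (Hb : Cmod (a * RtoC (q ^ N)) = (Cmod a * q ^ N)%R).
  { rewrite Cmod_mult, Cmod_RtoC_pos; auto. }
  pose proof (qpoch_bound a q N Hq) as HP.
  pose proof (qpoch_tail' (a * RtoC (q ^ N)) q m Hq) as HT. rewrite Hb in HT.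
  pose proof (Cmod_ge_0 a).
  assert (HE : (exp (Cmod a * q ^ N / (1 - q)) <= E)%R).
  { apply exp_mono. unfold Rdiv. apply Rmult_le_compat_r. apply Rlt_le, Rinv_0_lt_compat; lra. nra. }
  assert (0 <= Cmod a * q ^ N / (1 - q))%R. { apply Rdiv_le_0_compat; nra. }
  assert (0 <= E)%R by (apply Rlt_le, exp_pos).
  eapply Rle_trans. apply Rmult_le_compat. apply Cmod_ge_0. apply Cmod_ge_0. apply HP. apply HT.
  fold E.
  apply Rle_trans with (E * (Cmod a * q ^ N / (1 - q) * E))%R.
  apply Rmult_le_compat_l; auto. apply Rmult_le_compat_l; auto.
  right. field. lra.
Qed.

Lemma qpoch_inf_bound a q : (0 <= q < 1)%R -> (Cmod (qpoch_inf a q) <= exp (Cmod a / (1 - q)))%R.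
Proof.
  intros Hq. apply conv_bound with (fun n => qpoch a q n). apply qpoch_conv; auto.
  intros n. apply qpoch_bound; auto.
Qed.

Lemma qpoch_inf_shift a q : (0 <= q < 1)%R ->
  qpoch_inf a q = (RtoC 1 - a) * qpoch_inf (a * RtoC q) q.
Proof.
  intros Hq. change (Flim (fun n => qpoch a q n) = (RtoC 1 - a) * qpoch_inf (a * RtoC q) q).
  apply Flim_eq. apply conv_S.
  apply conv_ext with (fun n => (RtoC 1 - a) * qpoch (a * RtoC q) q n).
  { intros n. replace (S n) with (1 + n)%nat by lia. rewrite qpoch_add. simpl.
    rewrite Rmult_1_r. ring. }
  apply conv_scal. apply qpoch_conv; auto.
Qed.

Lemma qpoch_inf_zero a q m : (0 <= q < 1)%R -> qpoch a q m = 0 -> qpoch_inf a q = 0.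
Proof.
  intros Hq Hm. change (Flim (fun n => qpoch a q n) = 0). apply Flim_eq.
  intros eps He. exists m. intros n Hn. replace n with (m + (n - m))%nat by lia.
  rewrite qpoch_add, Hm. replace (0 * qpoch (a * RtoC (q ^ m)) q (n - m) - 0) with (RtoC 0) by ring.
  rewrite Cmod_0. auto.
Qed.

Lemma qpoch_nonzero a q n : (forall j, RtoC 1 - a * RtoC (q ^ j) <> 0) -> qpoch a q n <> 0.
Proof.
  intros H. induction n; simpl.
  - intros E. injection E. lra.
  - intros E. apply Cmult_integral in E. destruct E; auto. eapply H; eauto.
Qed.

Lemma qpoch_inf_nonzero a q : (0 < q < 1)%R -> (forall j, RtoC 1 - a * RtoC (q ^ j) <> 0) ->
  qpoch_inf a q <> 0.
Proof.
  intros Hq H.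
  pose proof (Cmod_ge_0 a).
  destruct (pow_small q (/ 8 * (1 - q) / (Cmod a + 1))%R) as [N HN]. lra.
  { apply Rdiv_lt_0_compat. nra. lra. }
  pose proof (pow_le q N ltac:(lra)).
  set (b := a * RtoC (q ^ N)).
  assert (Hb : (Cmod b / (1 - q) <= / 8)%R).
  { unfold b. rewrite Cmod_mult, Cmod_RtoC_pos; auto.
    apply Rmult_le_reg_r with ((1 - q) / (Cmod a + 1))%R. apply Rdiv_lt_0_compat; lra.
    replace (Cmod a * q ^ N / (1 - q) * ((1 - q) / (Cmod a + 1)))%R with
      (q ^ N * (Cmod a / (Cmod a + 1)))%R by (field; lra).
    replace (/ 8 * ((1 - q) / (Cmod a + 1)))%R with (/ 8 * (1 - q) / (Cmod a + 1))%R by (field; lra).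
    assert (Cmod a / (Cmod a + 1) <= 1)%R.
    { apply Rmult_le_reg_r with (Cmod a + 1)%R. lra. replace (Cmod a / (Cmod a + 1) * (Cmod a + 1))%R with (Cmod a) by (field; lra). lra. }
    assert (0 <= Cmod a / (Cmod a + 1))%R by (apply Rdiv_le_0_compat; lra). nra. }
  assert (Htail : forall m, (Cmod (qpoch b q m - 1) <= 3 / 8)%R).
  { intros m. eapply Rle_trans. apply qpoch_tail'. lra.
    assert (exp (Cmod b / (1 - q)) <= 3)%R.
    { eapply Rle_trans. apply exp_mono with (y := 1%R). lra. apply exp_le_3. }
    assert (0 <= Cmod b / (1 - q))%R. { apply Rdiv_le_0_compat. apply Cmod_ge_0. lra. }
    pose proof (exp_pos (Cmod b / (1 - q))). nra. }
  pose proof (qpoch_nonzero a q N H) as HPN. apply Cmod_gt_0 in HPN.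
  intros E0.
  pose proof (qpoch_conv a q ltac:(lra)) as Hc. rewrite E0 in Hc.
  destruct (Hc (Cmod (qpoch a q N) / 2)%R ltac:(lra)) as [M HM].
  specialize (HM (N + M)%nat ltac:(lia)). rewrite qpoch_add in HM. fold b in HM.
  replace (qpoch a q N * qpoch b q M - 0) with (qpoch a q N - qpoch a q N * (RtoC 1 - qpoch b q M)) in HM by ring.
  assert (Cmod (qpoch a q N * (RtoC 1 - qpoch b q M)) <= Cmod (qpoch a q N) * (3/8))%R.
  { rewrite Cmod_mult. apply Rmult_le_compat_l. apply Cmod_ge_0. rewrite Cmod_minus_sym. apply Htail. }
  pose proof (Cmod_triangle (qpoch a q N - qpoch a q N * (RtoC 1 - qpoch b q M)) (qpoch a q N * (RtoC 1 - qpoch b q M))).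
  replace (qpoch a q N - qpoch a q N * (RtoC 1 - qpoch b q M) + qpoch a q N * (RtoC 1 - qpoch b q M)) with (qpoch a q N) in H3 by ring.
  lra.
Qed.

Section S.
Variables (alpha beta : C) (q : R) (z : C).
Hypothesis hq : (0 < q < 1)%R.
Hypothesis ha : (Cmod alpha < 1)%R.

Definition fk (k : nat) : C :=
  alpha * (RtoC 1 + z * z * RtoC (q ^ (2 * k))) - beta * RtoC (q ^ k) * (RtoC 1 + z * z).

Lemma ck_S k : ck alpha beta q z (S k) = ck alpha beta q z k * fk k.
Proof. reflexivity. Qed.

Definition Qk k := qpoch (RtoC q) q k.

Lemma Qk_S k : Qk (S k) = Qk k * (RtoC 1 - RtoC q * RtoC (q ^ k)).
Proof. reflexivity. Qed.

Lemma one_minus_qk_nz k : RtoC 1 - RtoC q * RtoC (q ^ k) <> 0.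
Proof.
  rewrite <- RtoC_mult, <- RtoC_minus. intros E. injection E. intros E'.
  pose proof (pow_le1 q k ltac:(lra)). pose proof (pow_le q k ltac:(lra)).
  assert (q * q ^ k < 1)%R. { apply Rle_lt_trans with (1 * q ^ k)%R. nra. nra. }
  lra.
Qed.

Lemma Qk_nz k : Qk k <> 0.
Proof. exact (qpoch_nonzero _ _ _ (fun j => one_minus_qk_nz j)). Qed.

Definition uk k := ck alpha beta q z k / Qk k.

Lemma uk_S k : uk (S k) = uk k * fk k / (RtoC 1 - RtoC q * RtoC (q ^ k)).
Proof.
  unfold uk. rewrite ck_S, Qk_S. field. split; [apply Qk_nz|apply one_minus_qk_nz].
Qed.

Definition Cz := (Cmod alpha * Cmod (z * z) + Cmod beta * (1 + Cmod (z * z)))%R.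

Lemma fk_bound k : (Cmod (fk k) <= Cmod alpha + Cz * q ^ k)%R.
Proof.
  unfold fk, Cz. pose proof (pow_le q k ltac:(lra)). pose proof (pow_le1 q k ltac:(lra)).
  assert (H2 : (q ^ (2 * k) <= q ^ k)%R) by (apply pow_anti; lia || lra).
  pose proof (pow_le q (2*k) ltac:(lra)).
  pose proof (Cmod_ge_0 alpha). pose proof (Cmod_ge_0 beta). pose proof (Cmod_ge_0 (z*z)).
  eapply Rle_trans. unfold Cminus. apply Cmod_triangle. rewrite Cmod_opp.
  rewrite !Cmod_mult.
  assert (Cmod (RtoC 1 + z * z * RtoC (q ^ (2 * k))) <= 1 + Cmod (z*z) * q ^ k)%R.
  { eapply Rle_trans. apply Cmod_triangle. rewrite Cmod_1, Cmod_mult, Cmod_RtoC_pos; auto. nra. }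
  assert (Cmod (RtoC 1 + z * z) <= 1 + Cmod (z*z))%R.
  { eapply Rle_trans. apply Cmod_triangle. rewrite Cmod_1. lra. }
  rewrite Cmod_RtoC_pos; auto.
  assert (Cmod alpha * Cmod (RtoC 1 + z * z * RtoC (q ^ (2 * k))) <= Cmod alpha * (1 + Cmod (z*z) * q ^ k))%R
    by (apply Rmult_le_compat_l; auto).
  assert (Cmod beta * q ^ k * Cmod (RtoC 1 + z * z) <= Cmod beta * q ^ k * (1 + Cmod (z*z)))%R
    by (apply Rmult_le_compat_l; nra).
  replace (Cmod z * Cmod z)%R with (Cmod (z*z)) by apply Cmod_mult. nra.
Qed.

Lemma sum_f_R0_ge f K j : (forall i, 0 <= f i)%R -> (j <= K)%nat -> (f j <= sum_f_R0 f K)%R.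
Proof.
  intros Hf Hj. induction K.
  - replace j with O by lia. simpl. lra.
  - destruct (Nat.eq_dec j (S K)). subst. simpl. pose proof (cond_pos_sum f K).
    assert (0 <= sum_f_R0 f K)%R. { clear -Hf. induction K; simpl. apply Hf. pose proof (Hf (S K)). lra. }
    lra.
    simpl. pose proof (Hf (S K)). specialize (IHK ltac:(lia)). lra.
Qed.

Lemma uk_geo : exists M r, (0 <= r < 1)%R /\ forall k, (Cmod (uk k) <= M * r ^ k)%R.
Proof.
  set (r := ((1 + Cmod alpha) / 2)%R).
  pose proof (Cmod_ge_0 alpha) as Ha0.
  assert (Hr : (/2 <= r < 1)%R) by (unfold r; lra).
  assert (HC : (0 <= Cz)%R).
  { unfold Cz. pose proof (Cmod_ge_0 beta). pose proof (Cmod_ge_0 (z*z)). nra. }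
  destruct (pow_small q ((1 - Cmod alpha) / 2 / (Cz + 1))%R) as [K HK]. lra.
  { apply Rdiv_lt_0_compat; lra. }
  assert (Hstep : forall k, (K <= k)%nat -> (Cmod (uk (S k)) <= r * Cmod (uk k))%R).
  { intros k Hk. rewrite uk_S. unfold Cdiv. rewrite !Cmod_mult, Cmod_inv by apply one_minus_qk_nz.
    rewrite <- RtoC_mult, <- RtoC_minus, Cmod_R.
    pose proof (pow_le1 q k ltac:(lra)). pose proof (pow_le q k ltac:(lra)).
    assert (Hqk : (q ^ k <= q ^ K)%R) by (apply pow_anti; lra || lia).
    assert (0 < 1 - q * q ^ k)%R. { assert (q * q ^ k <= q ^ k)%R by nra. assert (q * q^k < 1)%R by nra. lra. }
    rewrite Rabs_pos_eq by lra.
    pose proof (fk_bound k).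
    assert (Hsmall : ((Cz + 1) * q ^ k <= (1 - Cmod alpha) / 2)%R).
    { apply Rle_trans with ((Cz + 1) * q ^ K)%R. nra.
      apply Rmult_le_reg_r with (/ (Cz + 1))%R. apply Rinv_0_lt_compat; lra.
      replace ((Cz + 1) * q ^ K * / (Cz + 1))%R with (q ^ K)%R by (field; lra).
      left. eapply Rlt_le_trans. apply HK. right. unfold Rdiv. ring. }
    assert (Cmod (fk k) <= r * (1 - q * q ^ k))%R.
    { unfold r in *. assert (q * q ^ k <= q ^ k)%R by nra. nra. }
    pose proof (Cmod_ge_0 (uk k)). pose proof (Cmod_ge_0 (fk k)).
    apply Rle_trans with (Cmod (uk k) * (r * (1 - q * q ^ k)) * / (1 - q * q ^ k))%R.
    apply Rmult_le_compat_r. apply Rlt_le, Rinv_0_lt_compat; lra.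
    apply Rmult_le_compat_l; auto.
    right. field. lra. }
  set (M := sum_f_R0 (fun j => Cmod (uk j) / r ^ j)%R K).
  exists M, r. split. lra.
  assert (Hrp : forall j, (0 < r ^ j)%R) by (intros; apply pow_lt; lra).
  intros k. induction k.
  - pose proof (sum_f_R0_ge (fun j => Cmod (uk j) / r ^ j)%R K O) as H.
    simpl in H. simpl. fold M in H. rewrite Rdiv_1_r in H. rewrite Rmult_1_r. apply H.
    intros i. apply Rdiv_le_0_compat. apply Cmod_ge_0. apply Hrp. lia.
  - destruct (le_lt_dec (S k) K).
    + pose proof (sum_f_R0_ge (fun j => Cmod (uk j) / r ^ j)%R K (S k)) as H.
      fold M in H. specialize (H ltac:(intros i; apply Rdiv_le_0_compat; [apply Cmod_ge_0|apply Hrp]) l).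
      apply Rmult_le_reg_r with (/ r ^ S k)%R. apply Rinv_0_lt_compat, Hrp.
      replace (M * r ^ S k * / r ^ S k)%R with M by (field; specialize (Hrp (S k)); lra). exact H.
    + eapply Rle_trans. apply Hstep. lia. simpl.
      replace (M * (r * r ^ k))%R with (r * (M * r ^ k))%R by ring.
      apply Rmult_le_compat_l; lra.
Qed.

End S.

Section S.
Variables (alpha beta : C) (q : R) (z : C).
Hypothesis hq : (0 < q < 1)%R.
Hypothesis ha : (Cmod alpha < 1)%R.

Definition Pk k := qpoch_inf (RtoC (q ^ S k) * (z * z)) q.
Definition Tk k := Pk k / qpoch (RtoC q) q k * ck alpha beta q z k.
Definition term (m : nat) k := Tk k * RtoC (q ^ (m * k)).
Definition Sm (m : nat) := csum (term m).

Lemma RtoC_pow2 k : RtoC (q ^ (2 * k)) = RtoC (q ^ k) * RtoC (q ^ k).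
Proof. rewrite <- RtoC_mult. f_equal. replace (2 * k)%nat with (k + k)%nat by lia. apply pow_add. Qed.

Lemma RtoC_powS k : RtoC (q ^ S k) = RtoC q * RtoC (q ^ k).
Proof. rewrite <- RtoC_mult. reflexivity. Qed.

Lemma RtoC_powmS m k : RtoC (q ^ (m * S k)) = RtoC (q ^ m) * RtoC (q ^ (m * k)).
Proof. rewrite <- RtoC_mult. f_equal. rewrite <- pow_add. f_equal. lia. Qed.

Lemma Pk_shift k : Pk k = (RtoC 1 - RtoC (q ^ S k) * (z * z)) * Pk (S k).
Proof.
  unfold Pk. rewrite qpoch_inf_shift by lra. f_equal. f_equal.
  rewrite (RtoC_powS (S k)). ring.
Qed.

Lemma Tk_geo : exists K r, forall m, geo (term m) K r.
Proof.
  destruct (uk_geo alpha beta q z hq ha) as [M [r [Hr HM]]].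
  set (E := exp (Cmod (z * z) / (1 - q))).
  exists (E * M)%R, r. intros m. split; auto. intros k.
  unfold term, Tk.
  replace (Pk k / qpoch (RtoC q) q k * ck alpha beta q z k * RtoC (q ^ (m * k)))
    with (Pk k * uk alpha beta q z k * RtoC (q ^ (m * k))).
  2:{ unfold uk, Qk. field. apply Qk_nz; auto. }
  rewrite !Cmod_mult, Cmod_RtoC_pos by (apply pow_le; lra).
  pose proof (pow_le1 q (m * k) ltac:(lra)). pose proof (pow_le q (m * k) ltac:(lra)).
  assert (HP : (Cmod (Pk k) <= E)%R).
  { unfold Pk. eapply Rle_trans. apply qpoch_inf_bound. lra. apply exp_mono.
    unfold Rdiv. apply Rmult_le_compat_r. apply Rlt_le, Rinv_0_lt_compat; lra.
    rewrite (Cmod_mult (RtoC _)), Cmod_RtoC_pos by (apply pow_le; lra).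
    pose proof (pow_le1 q (S k) ltac:(lra)). pose proof (Cmod_ge_0 (z*z)). nra. }
  pose proof (HM k). pose proof (Cmod_ge_0 (Pk k)). pose proof (Cmod_ge_0 (uk alpha beta q z k)).
  assert (0 <= E)%R by (apply Rlt_le, exp_pos).
  apply Rle_trans with (Cmod (Pk k) * Cmod (uk alpha beta q z k) * 1)%R. apply Rmult_le_compat_l. apply Rmult_le_pos; auto. auto. rewrite Rmult_1_r.
  replace (E * M * r ^ k)%R with (E * (M * r ^ k))%R by ring.
  apply Rmult_le_compat; auto.
Qed.

Lemma key_id m k :
  term m (S k) * (RtoC 1 + z * z * RtoC (q ^ (2 * S k)) - (RtoC 1 + z * z) * RtoC (q ^ S k))
  = RtoC (q ^ m) * (term m k * fk alpha beta q z k).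
Proof.
  unfold term, Tk. rewrite (Pk_shift k). rewrite ck_S.
  change (qpoch (RtoC q) q (S k)) with (Qk q (S k)). change (qpoch (RtoC q) q k) with (Qk q k).
  rewrite Qk_S. unfold fk.
  rewrite !RtoC_powmS, !RtoC_pow2, !RtoC_powS.
  rewrite pow_O. set (A := Pk (S k)). set (B := Qk q k). set (D := ck _ _ _ _ k). field. split. apply Qk_nz; auto.
  apply one_minus_qk_nz; auto.
Qed.

Lemma csum_lin3 (A B D : nat -> C) c1 c2 c3 K r : geo A K r -> geo B K r -> geo D K r ->
  csum (fun k => c1 * A k + c2 * B k + c3 * D k) = c1 * csum A + c2 * csum B + c3 * csum D.
Proof.
  intros HA HB HD.
  transitivity (csum (fun k => c1 * A k + c2 * B k) + csum (fun k => c3 * D k)).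
  { apply (csum_plus (fun k => c1 * A k + c2 * B k) (fun k => c3 * D k) (Cmod c1 * K + Cmod c2 * K)%R (Cmod c3 * K)%R r).
    apply geo_plus; apply geo_scal; eauto. apply geo_scal; eauto. }
  rewrite (csum_plus (fun k => c1 * A k) (fun k => c2 * B k) (Cmod c1 * K)%R (Cmod c2 * K)%R r) by (apply geo_scal; eauto).
  rewrite (csum_scal A c1 K r), (csum_scal B c2 K r), (csum_scal D c3 K r); auto.
Qed.

Lemma geo_mulpow f K r j : geo f K r -> geo (fun k => f k * RtoC (q ^ (j * k))) K r.
Proof.
  apply geo_le. intros k. rewrite Cmod_mult, Cmod_RtoC_pos by (apply pow_le; lra).
  pose proof (pow_le1 q (j * k) ltac:(lra)). pose proof (Cmod_ge_0 (f k)). nra.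
Qed.

Lemma term_add m j k : term (m + j) k = term m k * RtoC (q ^ (j * k)).
Proof. unfold term. rewrite <- Cmult_assoc, <- RtoC_mult, <- pow_add. do 3 f_equal. lia. Qed.

Lemma rec_S m :
  (RtoC 1 - alpha * RtoC (q ^ m)) * (Sm m + z * z * Sm (m + 2)) -
  (RtoC 1 + z * z) * (RtoC 1 - beta * RtoC (q ^ m)) * Sm (m + 1) = 0.
Proof.
  destruct Tk_geo as [K [r Hg]].
  set (a := term m).
  set (x := RtoC (q ^ m)).
  assert (Ga : geo a K r) by apply Hg.
  assert (G1 : geo (fun k => a k * RtoC (q ^ (1 * k))) K r) by (apply geo_mulpow; auto).
  assert (G2 : geo (fun k => a k * RtoC (q ^ (2 * k))) K r) by (apply geo_mulpow; auto).
  assert (E1 : Sm (m + 1) = csum (fun k => a k * RtoC (q ^ (1 * k)))).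
  { apply csum_ext. intros k. apply term_add. }
  assert (E2 : Sm (m + 2) = csum (fun k => a k * RtoC (q ^ (2 * k)))).
  { apply csum_ext. intros k. apply term_add. }
  set (g := fun k => RtoC 1 * a k + (z * z) * (a k * RtoC (q ^ (2 * k)))
                     + (- (RtoC 1 + z * z)) * (a k * RtoC (q ^ (1 * k)))).
  set (h := fun k => alpha * a k + (alpha * (z * z)) * (a k * RtoC (q ^ (2 * k)))
                     + (- (beta * (RtoC 1 + z * z))) * (a k * RtoC (q ^ (1 * k)))).
  assert (Lg : csum g = RtoC 1 * csum a + (z * z) * csum (fun k => a k * RtoC (q ^ (2 * k)))
                     + (- (RtoC 1 + z * z)) * csum (fun k => a k * RtoC (q ^ (1 * k)))).
  { unfold g. apply (csum_lin3 _ _ _ _ _ _ K r); auto. }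
  assert (Lh : csum h = alpha * csum a + (alpha * (z * z)) * csum (fun k => a k * RtoC (q ^ (2 * k)))
                     + (- (beta * (RtoC 1 + z * z))) * csum (fun k => a k * RtoC (q ^ (1 * k)))).
  { unfold h. apply (csum_lin3 _ _ _ _ _ _ K r); auto. }
  assert (Gg : exists K', geo g K' r).
  { eexists. unfold g. apply geo_plus. apply geo_plus. apply geo_scal; eauto.
    apply geo_scal; eauto. apply geo_scal; eauto. }
  destruct Gg as [K' Gg].
  assert (Hs : csum g = g O + csum (fun k => g (S k))) by (eapply csum_shift; eauto).
  assert (H0 : g O = 0).
  { unfold g. replace (2 * 0)%nat with O by lia. replace (1 * 0)%nat with O by lia. simpl. ring. }
  assert (HS : forall k, g (S k) = x * h k).
  { intros k. unfold g, h, a, x. rewrite Nat.mul_1_l.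
    transitivity (term m (S k) * (RtoC 1 + z * z * RtoC (q ^ (2 * S k)) - (RtoC 1 + z * z) * RtoC (q ^ S k))).
    ring. rewrite key_id. unfold fk. rewrite !Nat.mul_1_l. ring. }
  assert (Gh : exists K', geo h K' r).
  { eexists. unfold h. apply geo_plus. apply geo_plus. apply geo_scal; eauto.
    apply geo_scal; eauto. apply geo_scal; eauto. }
  destruct Gh as [K'' Gh].
  rewrite (csum_ext _ _ HS) in Hs. rewrite (csum_scal h x K'' r Gh) in Hs. rewrite H0 in Hs.
  change (Sm m) with (csum a). rewrite E1, E2.
  transitivity (csum g - x * csum h). rewrite Lg, Lh. fold x. ring.
  rewrite Hs. ring.
Qed.
End S.

Lemma psi_eq alpha beta q z n :
  psi_plus alpha beta q z n = zpowC z n * Sm alpha beta q z (Z.to_nat (n + 1)).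
Proof. reflexivity. Qed.

Lemma zpow_nat z n : zpowC z (Z.of_nat n) = Cpow z n.
Proof.
  destruct n as [|n]. reflexivity. simpl. rewrite SuccNat2Pos.id_succ. reflexivity.
Qed.

Lemma zpow_succ z n : zpowC z (Z.of_nat n + 1) = Cpow z n * z.
Proof.
  replace (Z.of_nat n + 1)%Z with (Z.of_nat (S n)) by lia. rewrite zpow_nat. simpl. ring.
Qed.

Lemma zpow_pred (z : C) (n : nat) : z <> 0 -> zpowC z (Z.of_nat n - 1) = Cpow z n / z.
Proof.
  intros hz. destruct n as [|n].
  - simpl. field. auto.
  - replace (Z.of_nat (S n) - 1)%Z with (Z.of_nat n) by lia. rewrite zpow_nat. simpl. field. auto.
Qed.

Lemma one_minus_aq_nz alpha q n : (0 < q < 1)%R -> (Cmod alpha < 1)%R ->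
  RtoC 1 - alpha * RtoC (q ^ n) <> 0.
Proof.
  intros hq ha E.
  assert (Cmod (alpha * RtoC (q ^ n)) = 1)%R.
  { replace (alpha * RtoC (q ^ n)) with (RtoC 1 - (RtoC 1 - alpha * RtoC (q ^ n))) by ring.
    rewrite E. replace (RtoC 1 - 0) with (RtoC 1) by ring. apply Cmod_1. }
  rewrite Cmod_mult, Cmod_RtoC_pos in H by (apply pow_le; lra).
  pose proof (pow_le1 q n ltac:(lra)). pose proof (pow_le q n ltac:(lra)). pose proof (Cmod_ge_0 alpha).
  nra.
Qed.

Lemma psi_rec alpha beta q (w : C) (hq : (0 < q < 1)%R) (ha : (Cmod alpha < 1)%R) (hw : w <> 0) (n : nat) :
  psi_plus alpha beta q w (Z.of_nat n - 1)
  - (w + / w) * ((RtoC 1 - beta * RtoC (q ^ n)) / (RtoC 1 - alpha * RtoC (q ^ n)))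
    * psi_plus alpha beta q w (Z.of_nat n)
  + psi_plus alpha beta q w (Z.of_nat n + 1) = 0.
Proof.
  rewrite !psi_eq.
  replace (Z.to_nat (Z.of_nat n - 1 + 1)) with n by lia.
  replace (Z.to_nat (Z.of_nat n + 1)) with (n + 1)%nat by lia.
  replace (Z.to_nat (Z.of_nat n + 1 + 1)) with (n + 2)%nat by lia.
  rewrite (zpow_pred w n hw). rewrite zpow_nat. rewrite zpow_succ.
  pose proof (rec_S alpha beta q w hq ha n) as R.
  pose proof (one_minus_aq_nz alpha q n hq ha) as Hn.
  set (S0 := Sm alpha beta q w n) in *. set (S1 := Sm alpha beta q w (n + 1)) in *.
  set (S2 := Sm alpha beta q w (n + 2)) in *.
  transitivity (Cpow w n / w / (RtoC 1 - alpha * RtoC (q ^ n)) *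
    ((RtoC 1 - alpha * RtoC (q ^ n)) * (S0 + w * w * S2) -
     (RtoC 1 + w * w) * (RtoC 1 - beta * RtoC (q ^ n)) * S1)).
  field. split; auto.
  rewrite R. ring.
Qed.

Lemma Cpow_inv (z : C) n : z <> 0 -> Cpow z n * Cpow (/ z) n = 1.
Proof.
  intros hz. induction n; simpl. ring.
  transitivity ((z * / z) * (Cpow z n * Cpow (/ z) n)). ring. rewrite IHn. field. auto.
Qed.

Lemma small_all_zero (d : C) (K q : R) : (0 <= q < 1)%R -> (forall m, (Cmod d <= K * q ^ m)%R) -> d = 0.
Proof.
  intros hq H. apply Cmod_small_0. intros eps He.
  assert (HK : (0 <= K)%R). { specialize (H O). simpl in H. pose proof (Cmod_ge_0 d). lra. }
  destruct (pow_small q (eps / (K + 1))%R hq) as [N HN]. apply Rdiv_lt_0_compat; lra.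
  specialize (H N). pose proof (pow_le q N ltac:(lra)).
  apply Rle_lt_trans with ((K + 1) * q ^ N)%R. nra.
  apply Rmult_lt_reg_r with (/ (K + 1))%R. apply Rinv_0_lt_compat; lra.
  replace ((K + 1) * q ^ N * / (K + 1))%R with (q ^ N)%R by (field; lra).
  eapply Rlt_le_trans. apply HN. right. field. lra.
Qed.

Lemma S_approx alpha beta q w (hq : (0 < q < 1)%R) (ha : (Cmod alpha < 1)%R) :
  exists C0, (0 <= C0)%R /\ forall m,
    (Cmod (Sm alpha beta q w m - Tk alpha beta q w 0) <= C0 * q ^ m)%R /\
    (Cmod (Sm alpha beta q w m) <= C0)%R /\ (Cmod (Tk alpha beta q w 0) <= C0)%R.
Proof.
  destruct (Tk_geo alpha beta q w hq ha) as [K [r Hg]].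
  pose proof (geo_K_nonneg _ _ _ (Hg O)) as HK.
  destruct (Hg O) as [[Hr0 Hr1] _].
  exists (K / (1 - r) + K)%R. split. assert (0 <= K / (1 - r))%R by (apply Rdiv_le_0_compat; lra). lra.
  intros m.
  assert (HT : (Cmod (Tk alpha beta q w 0) <= K)%R).
  { destruct (Hg O) as [_ H]. specialize (H O). unfold term in H. simpl in H.
    rewrite Cmult_1_r in H. lra. }
  assert (Hs : Sm alpha beta q w m = Tk alpha beta q w 0 + csum (fun k => term alpha beta q w m (S k))).
  { unfold Sm. rewrite (csum_shift _ K r (Hg m)). f_equal. unfold term. rewrite Nat.mul_0_r. simpl. ring. }
  assert (Gt : geo (fun k => term alpha beta q w m (S k)) (K * q ^ m) r).
  { split; auto. intros k. 
    replace (term alpha beta q w m (S k)) with (term alpha beta q w 0 (S k) * RtoC (q ^ (m * S k))).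
    2:{ rewrite <- (term_add alpha beta q w 0 m). reflexivity. }
    rewrite Cmod_mult, Cmod_RtoC_pos by (apply pow_le; lra).
    destruct (Hg O) as [_ H]. specialize (H (S k)).
    assert (q ^ (m * S k) <= q ^ m)%R by (apply pow_anti; [lra| destruct m; lia]).
    pose proof (pow_le q (m * S k) ltac:(lra)). pose proof (pow_le q m ltac:(lra)).
    pose proof (pow_le r k ltac:(lra)).
    assert (r ^ S k <= r ^ k)%R by (apply pow_anti; lra || lia).
    pose proof (Cmod_ge_0 (term alpha beta q w 0 (S k))).
    apply Rle_trans with (K * r ^ S k * q ^ m)%R.
    apply Rmult_le_compat; auto. 
    replace (K * q ^ m * r ^ k)%R with (K * r ^ k * q ^ m)%R by ring.
    apply Rmult_le_compat_r; auto. apply Rmult_le_compat_l; auto. }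
  pose proof (csum_bound _ _ _ Gt) as B1.
  pose proof (csum_bound _ _ _ (Hg m)) as B2.
  pose proof (pow_le q m ltac:(lra)).
  split; [|split].
  - rewrite Hs. replace (Tk alpha beta q w 0 + csum (fun k => term alpha beta q w m (S k)) - Tk alpha beta q w 0)
      with (csum (fun k => term alpha beta q w m (S k))) by ring.
    eapply Rle_trans. apply B1.
    replace (K * q ^ m / (1 - r))%R with (K / (1 - r) * q ^ m)%R by (field; lra).
    apply Rmult_le_compat_r; auto. lra.
  - change (Cmod (csum (term alpha beta q w m)) <= K / (1 - r) + K)%R. lra.
  - assert (0 <= K / (1 - r))%R by (apply Rdiv_le_0_compat; lra). lra.
Qed.

Lemma prod_diff (a b c d : C) : (Cmod (a * b - c * d) <= Cmod a * Cmod (b - d) + Cmod d * Cmod (a - c))%R.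
Proof.
  replace (a * b - c * d) with (a * (b - d) + d * (a - c)) by ring.
  eapply Rle_trans. apply Cmod_triangle. rewrite !Cmod_mult. lra.
Qed.

Section W.
Variables (alpha beta : C) (q : R) (z : C).
Hypothesis hq : (0 < q < 1)%R.
Hypothesis ha : (Cmod alpha < 1)%R.
Hypothesis hz : z <> 0.

Definition pp n := psi_plus alpha beta q z n.
Definition pm n := psi_minus alpha beta q z n.
Definition Wm (m : nat) := pp (Z.of_nat m - 1) * pm (Z.of_nat m) - pp (Z.of_nat m) * pm (Z.of_nat m - 1).

Lemma invz_nz : / z <> 0.
Proof. intros E. apply hz. replace z with (z * (z * / z)) by (field; auto). rewrite E. ring. Qed.

Lemma Wm_S m : Wm (S m) = Wm m.
Proof.
  unfold Wm.
  replace (Z.of_nat (S m) - 1)%Z with (Z.of_nat m) by lia.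
  replace (Z.of_nat (S m)) with (Z.of_nat m + 1)%Z by lia.
  pose proof (psi_rec alpha beta q z hq ha hz m) as R1.
  pose proof (psi_rec alpha beta q (/ z) hq ha invz_nz m) as R2.
  replace (/ z + / / z) with (z + / z) in R2 by (field; auto).
  fold (pp (Z.of_nat m - 1)) (pp (Z.of_nat m)) (pp (Z.of_nat m + 1)) in R1.
  change (psi_plus alpha beta q (/ z)) with pm in R2.
  set (c := (z + / z) * ((RtoC 1 - beta * RtoC (q ^ m)) / (RtoC 1 - alpha * RtoC (q ^ m)))) in *.
  assert (E1 : pp (Z.of_nat m + 1) = c * pp (Z.of_nat m) - pp (Z.of_nat m - 1)).
  { replace (pp (Z.of_nat m + 1)) with (pp (Z.of_nat m + 1) - 0) by ring. rewrite <- R1. ring. }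
  assert (E2 : pm (Z.of_nat m + 1) = c * pm (Z.of_nat m) - pm (Z.of_nat m - 1)).
  { replace (pm (Z.of_nat m + 1)) with (pm (Z.of_nat m + 1) - 0) by ring. rewrite <- R2. ring. }
  rewrite E1, E2. ring.
Qed.

Lemma Wm_const m : Wm m = Wm 0.
Proof. induction m. auto. rewrite Wm_S. auto. Qed.

Lemma Wm_val m : Wm m = / z * Sm alpha beta q z m * Sm alpha beta q (/ z) (m + 1)
                        - z * Sm alpha beta q z (m + 1) * Sm alpha beta q (/ z) m.
Proof.
  unfold Wm, pp, pm, psi_minus. rewrite !psi_eq.
  replace (Z.to_nat (Z.of_nat m - 1 + 1)) with m by lia.
  replace (Z.to_nat (Z.of_nat m + 1)) with (m + 1)%nat by lia.
  rewrite (zpow_pred z m hz), (zpow_pred (/ z) m invz_nz), !zpow_nat.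
  pose proof (Cpow_inv z m hz) as HP.
  set (P := Cpow z m) in *. set (Pi := Cpow (/ z) m) in *.
  transitivity ((P * Pi) * (/ z * Sm alpha beta q z m * Sm alpha beta q (/ z) (m + 1)
                        - z * Sm alpha beta q z (m + 1) * Sm alpha beta q (/ z) m)).
  field. auto. rewrite HP. ring.
Qed.

Lemma W0_val : Wm 0 = / z * (RtoC 1 - z * z) * Tk alpha beta q z 0 * Tk alpha beta q (/ z) 0.
Proof.
  destruct (S_approx alpha beta q z hq ha) as [C1 [HC1 H1]].
  destruct (S_approx alpha beta q (/ z) hq ha) as [C2 [HC2 H2]].
  set (T1 := Tk alpha beta q z 0) in *. set (T2 := Tk alpha beta q (/ z) 0) in *.
  set (C := (C1 + C2)%R).
  assert (Wm 0 - (/ z * T1 * T2 - z * T1 * T2) = 0).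
  { apply (small_all_zero _ ((Cmod (/ z) + Cmod z) * (2 * C * C))%R q). lra.
    intros m. rewrite <- (Wm_const m), Wm_val.
    destruct (H1 m) as [A1 [A2 A3]]. destruct (H1 (m + 1)%nat) as [A1' [A2' _]].
    destruct (H2 m) as [B1 [B2 B3]]. destruct (H2 (m + 1)%nat) as [B1' [B2' _]].
    set (Sa := Sm alpha beta q z m) in *. set (Sa' := Sm alpha beta q z (m + 1)) in *.
    set (Sb := Sm alpha beta q (/ z) m) in *. set (Sb' := Sm alpha beta q (/ z) (m + 1)) in *.
    replace (/ z * Sa * Sb' - z * Sa' * Sb - (/ z * T1 * T2 - z * T1 * T2))
      with (/ z * (Sa * Sb' - T1 * T2) + - (z * (Sa' * Sb - T1 * T2))) by ring.
    eapply Rle_trans. apply Cmod_triangle. rewrite Cmod_opp, !Cmod_mult.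
    pose proof (prod_diff Sa Sb' T1 T2). pose proof (prod_diff Sa' Sb T1 T2).
    pose proof (pow_le q m ltac:(lra)).
    assert (q ^ (m + 1) <= q ^ m)%R by (apply pow_anti; lra || lia).
    assert (X1 : (Cmod (Sa * Sb' - T1 * T2) <= 2 * C * C * q ^ m)%R).
    { eapply Rle_trans. apply H. unfold C.
      pose proof (Cmod_ge_0 Sa). pose proof (Cmod_ge_0 T2).
      pose proof (Cmod_ge_0 (Sb' - T2)). pose proof (Cmod_ge_0 (Sa - T1)).
      assert (Cmod Sa * Cmod (Sb' - T2) <= (C1 + C2) * ((C1 + C2) * q ^ m))%R.
      { apply Rmult_le_compat; auto. lra. nra. }
      assert (Cmod T2 * Cmod (Sa - T1) <= (C1 + C2) * ((C1 + C2) * q ^ m))%R.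
      { apply Rmult_le_compat; auto. lra. nra. }
      nra. }
    assert (X2 : (Cmod (Sa' * Sb - T1 * T2) <= 2 * C * C * q ^ m)%R).
    { eapply Rle_trans. apply H0. unfold C.
      pose proof (Cmod_ge_0 Sa'). pose proof (Cmod_ge_0 T2).
      pose proof (Cmod_ge_0 (Sb - T2)). pose proof (Cmod_ge_0 (Sa' - T1)).
      assert (Cmod Sa' * Cmod (Sb - T2) <= (C1 + C2) * ((C1 + C2) * q ^ m))%R.
      { apply Rmult_le_compat; auto. lra. nra. }
      assert (Cmod T2 * Cmod (Sa' - T1) <= (C1 + C2) * ((C1 + C2) * q ^ m))%R.
      { apply Rmult_le_compat; auto. lra. nra. }
      nra. }
    pose proof (Cmod_ge_0 (/ z)). pose proof (Cmod_ge_0 z).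
    apply Rle_trans with (Cmod (/ z) * (2 * C * C * q ^ m) + Cmod z * (2 * C * C * q ^ m))%R.
    apply Rplus_le_compat; apply Rmult_le_compat_l; auto.
    right. ring. }
  replace (Wm 0) with ((Wm 0 - (/ z * T1 * T2 - z * T1 * T2)) + (/ z * T1 * T2 - z * T1 * T2)) by ring.
  rewrite H. field. auto.
Qed.
End W.

Lemma sq_root (z : C) (w : R) : (0 < w)%R -> z * z = RtoC (w * w) -> z = RtoC w \/ z = - RtoC w.
Proof.
  intros hw H. destruct z as [x y]. unfold Cmult, RtoC in H. simpl in H.
  injection H. intros H2 H1.
  assert (Hy : y = 0%R).
  { assert (x * y = 0)%R by lra. apply Rmult_integral in H0. destruct H0; auto.
    subst. nra. }
  subst y. assert ((x - w) * (x + w) = 0)%R by nra. apply Rmult_integral in H0.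
  destruct H0; [left|right]; unfold RtoC, Copp; simpl; f_equal; try lra.
Qed.

Lemma sqrtq_pow (q : R) (j : Z) : (0 < q)%R ->
  (powerRZ (sqrt q) j * powerRZ (sqrt q) j = powerRZ q j)%R.
Proof. intros hq. rewrite <- powerRZ_mult. rewrite sqrt_sqrt; lra. Qed.

Lemma powerRZ_negnat (q : R) (j : nat) : (0 < q)%R -> powerRZ q (- Z.of_nat j) = (/ q ^ j)%R.
Proof.
  intros hq. destruct j as [|j]. simpl. field.
  simpl. rewrite SuccNat2Pos.id_succ. reflexivity.
Qed.

Lemma qpoch_S_zero a q n : RtoC 1 - a * RtoC (q ^ n) = 0 -> qpoch a q (S n) = 0.
Proof. intros H. simpl. rewrite H. ring. Qed.

Lemma Tk0 alpha beta q w : Tk alpha beta q w 0 = qpoch_inf (RtoC q * (w * w)) q.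
Proof.
  unfold Tk, Pk. simpl qpoch. simpl ck. replace (RtoC (q ^ 1)) with (RtoC q) by (f_equal; ring).
  field.
Qed.

Section Main.
Variables (q : R) (alpha beta z : C).
Hypothesis hq : (0 < q < 1)%R.
Hypothesis ha : (Cmod alpha < 1)%R.
Hypothesis hz : z <> RtoC 0.

Definition Wv := / z * (qpoch_inf (z * z) q * qpoch_inf (RtoC q * / (z * z)) q).

Lemma W_eq : Wm alpha beta q z 0 = Wv.
Proof.
  rewrite (W0_val alpha beta q z hq ha hz), !Tk0. unfold Wv.
  rewrite (qpoch_inf_shift (z * z) q) by lra.
  replace (RtoC q * (/ z * / z)) with (RtoC q * / (z * z)) by (field; auto).
  replace (z * z * RtoC q) with (RtoC q * (z * z)) by ring. ring.
Qed.

Lemma psi_rec_minus n :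
  psi_minus alpha beta q z (Z.of_nat n - 1)
  - (z + / z) * ((RtoC 1 - beta * RtoC (q ^ n)) / (RtoC 1 - alpha * RtoC (q ^ n)))
    * psi_minus alpha beta q z (Z.of_nat n)
  + psi_minus alpha beta q z (Z.of_nat n + 1) = 0.
Proof.
  unfold psi_minus. replace (z + / z) with (/ z + / / z) by (field; auto).
  apply psi_rec; auto. apply invz_nz; auto.
Qed.

Lemma propagate (a b : C) :
  a * pp alpha beta q z (-1) + b * pm alpha beta q z (-1) = 0 ->
  a * pp alpha beta q z 0 + b * pm alpha beta q z 0 = 0 ->
  forall n, (-1 <= n)%Z -> a * pp alpha beta q z n + b * pm alpha beta q z n = 0.
Proof.
  intros Hm1 H0.
  set (e := fun n => a * pp alpha beta q z n + b * pm alpha beta q z n).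
  assert (forall m, e (Z.of_nat m - 1)%Z = 0 /\ e (Z.of_nat m) = 0).
  { induction m. split; auto.
    destruct IHm as [I1 I2].
    replace (Z.of_nat (S m) - 1)%Z with (Z.of_nat m) by lia. split; auto.
    replace (Z.of_nat (S m)) with (Z.of_nat m + 1)%Z by lia.
    pose proof (psi_rec alpha beta q z hq ha hz m) as R1.
    pose proof (psi_rec_minus m) as R2.
    fold (pp alpha beta q z (Z.of_nat m - 1)) (pp alpha beta q z (Z.of_nat m)) (pp alpha beta q z (Z.of_nat m + 1)) in R1.
    fold (pm alpha beta q z (Z.of_nat m - 1)) (pm alpha beta q z (Z.of_nat m)) (pm alpha beta q z (Z.of_nat m + 1)) in R2.
    unfold e in *.
    set (c := (z + / z) * ((RtoC 1 - beta * RtoC (q ^ m)) / (RtoC 1 - alpha * RtoC (q ^ m)))) in *.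
    transitivity (a * (pp alpha beta q z (Z.of_nat m - 1) - c * pp alpha beta q z (Z.of_nat m) + pp alpha beta q z (Z.of_nat m + 1))
      + b * (pm alpha beta q z (Z.of_nat m - 1) - c * pm alpha beta q z (Z.of_nat m) + pm alpha beta q z (Z.of_nat m + 1))
      - (a * pp alpha beta q z (Z.of_nat m - 1) + b * pm alpha beta q z (Z.of_nat m - 1))
      + c * (a * pp alpha beta q z (Z.of_nat m) + b * pm alpha beta q z (Z.of_nat m))).
    ring. rewrite R1, R2, I1, I2. ring. }
  intros n Hn. replace n with (Z.of_nat (Z.to_nat (n + 1)) - 1)%Z by lia. apply H.
Qed.

Lemma Wm0_unfold : Wm alpha beta q z 0 =
  pp alpha beta q z (-1) * pm alpha beta q z 0 - pp alpha beta q z 0 * pm alpha beta q z (-1).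
Proof. reflexivity. Qed.

End Main.

Theorem proposition2p4 (q : R) (alpha beta z : C)
  (hq : (0 < q < 1)%R) (ha : (Cmod alpha < 1)%R) (hz : z <> RtoC 0) :
  solves_rec alpha beta q z (psi_plus alpha beta q z) /\
  solves_rec alpha beta q z (psi_minus alpha beta q z) /\
  (forall n : Z, (-1 <= n)%Z ->
     psi_plus alpha beta q z n * psi_minus alpha beta q z (n + 1)
     - psi_plus alpha beta q z (n + 1) * psi_minus alpha beta q z n
     = / z * (qpoch_inf (z * z) q * qpoch_inf (RtoC q * / (z * z)) q)) /\
  (lin_indep (psi_plus alpha beta q z) (psi_minus alpha beta q z) <->
     ~ (exists j : Z, z = RtoC (powerRZ (sqrt q) j) \/ z = - RtoC (powerRZ (sqrt q) j))).
Proof.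
  assert (HW : forall n : Z, (-1 <= n)%Z ->
     psi_plus alpha beta q z n * psi_minus alpha beta q z (n + 1)
     - psi_plus alpha beta q z (n + 1) * psi_minus alpha beta q z n
     = Wv q z).
  { intros n Hn. rewrite <- (W_eq q alpha beta z hq ha hz).
    rewrite <- (Wm_const alpha beta q z hq ha hz (Z.to_nat (n + 1))).
    unfold Wm, pp, pm. replace (Z.of_nat (Z.to_nat (n + 1)) - 1)%Z with n by lia.
    replace (Z.of_nat (Z.to_nat (n + 1))) with (n + 1)%Z by lia. reflexivity. }
  split; [|split; [|split]].
  - intros n. apply psi_rec; auto.
  - intros n. apply psi_rec_minus; auto.
  - exact HW.
  - split.
    + intros Hli [j Hj].
      set (w := powerRZ (sqrt q) j) in *.
      assert (Hzz : z * z = RtoC (powerRZ q j)).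
      { rewrite <- (sqrtq_pow q j) by lra. fold w. rewrite RtoC_mult.
        destruct Hj as [Hj|Hj]; rewrite Hj; ring. }
      assert (HW0 : Wv q z = 0).
      { unfold Wv.
        destruct j as [|p|p].
        - simpl in Hzz. rewrite (qpoch_inf_zero (z * z) q 1) by (lra || (apply qpoch_S_zero; rewrite Hzz; simpl; ring)). ring.
        - simpl in Hzz.
          destruct (Pos.to_nat p) as [|k] eqn:Ek. pose proof (Pos2Nat.is_pos p). lia.
          rewrite (qpoch_inf_zero (RtoC q * / (z * z)) q (S k)). ring. lra.
          apply qpoch_S_zero. rewrite Hzz. simpl.
          assert (0 < q ^ k)%R by (apply pow_lt; lra).
          rewrite RtoC_mult. field. split; intros E; injection E; lra.
        - simpl in Hzz.
          rewrite (qpoch_inf_zero (z * z) q (S (Pos.to_nat p))). ring. lra.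
          apply qpoch_S_zero. rewrite Hzz.
          assert (0 < q ^ Pos.to_nat p)%R by (apply pow_lt; lra).
          rewrite <- RtoC_mult. replace (/ q ^ Pos.to_nat p * q ^ Pos.to_nat p)%R with 1%R by (field; lra).
          ring. }
      rewrite <- (W_eq q alpha beta z hq ha hz), Wm0_unfold in HW0.
      set (A := pp alpha beta q z (-1)) in *. set (B := pm alpha beta q z (-1)) in *.
      set (A0 := pp alpha beta q z 0) in *. set (B0 := pm alpha beta q z 0) in *.
      assert (HP : forall a b, a * A + b * B = 0 -> a * A0 + b * B0 = 0 -> a = 0 /\ b = 0).
      { intros a b H1 H2. apply Hli. intros n Hn.
        exact (propagate q alpha beta z hq ha hz a b H1 H2 n Hn). }
      destruct (classic (B <> 0 \/ A <> 0)) as [Hc|Hc].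
      * destruct (HP B (- A)) as [E1 E2]. ring.
        transitivity (- (A * B0 - A0 * B)). ring. rewrite HW0. ring.
        destruct Hc as [Hc|Hc]. auto. apply Hc. replace A with (- - A) by ring. rewrite E2. ring.
      * assert (HA : A = 0) by (apply NNPP; tauto). assert (HB : B = 0) by (apply NNPP; tauto).
        destruct (classic (B0 <> 0 \/ A0 <> 0)) as [Hd|Hd].
        -- destruct (HP B0 (- A0)) as [E1 E2]. rewrite HA, HB. ring. ring.
           destruct Hd as [Hd|Hd]. auto. apply Hd. replace A0 with (- - A0) by ring. rewrite E2. ring.
        -- assert (HA0 : A0 = 0) by (apply NNPP; tauto).
           destruct (HP 1 0) as [E1 _]. rewrite HA. ring. rewrite HA0. ring.
           injection E1. lra.
    + intros Hnot a b Hab.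
      assert (HWnz : Wv q z <> 0).
      { unfold Wv. intros E. apply Cmult_integral in E. destruct E as [E|E].
        apply (invz_nz z hz E).
        apply Cmult_integral in E. destruct E as [E|E].
        - revert E. apply qpoch_inf_nonzero. lra. intros j Ej. apply Hnot.
          exists (- Z.of_nat j)%Z.
          apply sq_root. apply powerRZ_lt. apply sqrt_lt_R0. lra.
          rewrite sqrtq_pow by lra. rewrite powerRZ_negnat by lra.
          assert (0 < q ^ j)%R by (apply pow_lt; lra).
          rewrite RtoC_inv by (apply Rgt_not_eq; lra).
          replace (z * z) with ((RtoC 1 - (RtoC 1 - z * z * RtoC (q ^ j))) / RtoC (q ^ j))
            by (field; intros E'; injection E'; lra).
          rewrite Ej. field. intros E'; injection E'; lra.
        - revert E. apply qpoch_inf_nonzero. lra. intros j Ej. apply Hnot.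
          exists (Z.of_nat (S j)).
          apply sq_root. apply powerRZ_lt. apply sqrt_lt_R0. lra.
          rewrite sqrtq_pow by lra. rewrite <- pow_powerRZ.
          assert (Hzz : z * z <> 0) by (intros E'; apply Cmult_integral in E'; tauto).
          transitivity ((z * z) * (RtoC 1 - (RtoC 1 - RtoC q * / (z * z) * RtoC (q ^ j)))).
          rewrite Ej. ring.
          change (q ^ S j)%R with (q * q ^ j)%R. rewrite RtoC_mult. field. auto. }
      rewrite <- (W_eq q alpha beta z hq ha hz), Wm0_unfold in HWnz.
      pose proof (Hab (-1)%Z ltac:(lia)) as H1. pose proof (Hab 0%Z ltac:(lia)) as H2.
      change (psi_plus alpha beta q z) with (pp alpha beta q z) in H1, H2.
      change (psi_minus alpha beta q z) with (pm alpha beta q z) in H1, H2.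
      set (A := pp alpha beta q z (-1)) in *. set (B := pm alpha beta q z (-1)) in *.
      set (A0 := pp alpha beta q z 0) in *. set (B0 := pm alpha beta q z 0) in *.
      split.
      * assert (a * (A * B0 - A0 * B) = 0).
        { transitivity (B0 * (a * A + b * B) - B * (a * A0 + b * B0)). ring. rewrite H1, H2. ring. }
        apply Cmult_integral in H. destruct H; tauto.
      * assert (b * (A * B0 - A0 * B) = 0).
        { transitivity (A * (a * A0 + b * B0) - A0 * (a * A + b * B)). ring. rewrite H1, H2. ring. }
        apply Cmult_integral in H. destruct H; tauto.
Qed.
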